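(* Let $\mathcal T$ and $\mathcal S$ be triangulated categories and let $T:\mathcal S\to\mathcal T$ be a triangle functor. Suppose $T$ has a left (respectively right) adjoint $S$, and let $\eta:ST\to\mathrm{id}$ be the counit (respectively $\tilde\epsilon:\mathrm{id}\to ST$ the unit) of the adjunction. Then an object $Q$ of $\mathcal S$ is $T$-relative projective (respectively injective) if and only if $\eta_Q$ is a split epimorphism (respectively $\tilde\epsilon_Q$ is a split monomorphism).
   Context: An object $Q$ of $\mathcal S$ is $T$-relative projective if the natural transformation $\mathcal S(Q,-)\to\mathcal T(TQ,T-)$ induced by $T$ is injective, and $T$-relative injective if the natural transformation $\mathcal S(-,Q)\to\mathcal T(T-,TQ)$ induced by $T$ is injective. *)

(* Defs.v *)
From HB Require Import structures.
From mathcomp Require Import all_boot all_algebra.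
Set Implicit Arguments. Unset Strict Implicit. Unset Printing Implicit Defensive.
Import GRing.Theory.
Local Open Scope ring_scope.

Record PreaddCat := {
  Ob :> Type;
  Hom : Ob -> Ob -> zmodType;
  cid : forall X, Hom X X;
  cmp : forall X Y Z, Hom Y Z -> Hom X Y -> Hom X Z;
  cmp_idl : forall X Y (f : Hom X Y), cmp (cid Y) f = f;
  cmp_idr : forall X Y (f : Hom X Y), cmp f (cid X) = f;
  cmp_assoc : forall X Y Z W (h : Hom Z W) (g : Hom Y Z) (f : Hom X Y),
      cmp h (cmp g f) = cmp (cmp h g) f;
  cmp_addl : forall X Y Z (g g' : Hom Y Z) (f : Hom X Y),
      cmp (g + g') f = cmp g f + cmp g' f;
  cmp_addr : forall X Y Z (g : Hom Y Z) (f f' : Hom X Y),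
      cmp g (f + f') = cmp g f + cmp g f'
}.
Arguments Hom {p} X Y.
Arguments cid {p} X.
Arguments cmp {p X Y Z} g f.

Record Functor (C D : PreaddCat) := {
  fobj :> C -> D;
  fmap : forall X Y : C, Hom X Y -> Hom (fobj X) (fobj Y);
  fmap_id : forall X, fmap (cid X) = cid (fobj X);
  fmap_cmp : forall X Y Z (g : Hom Y Z) (f : Hom X Y),
      fmap (cmp g f) = cmp (fmap g) (fmap f)
}.
Arguments fmap {C D} f {X Y} _ : rename.

Definition is_iso (C : PreaddCat) (X Y : C) (f : Hom X Y) : Prop :=
  exists g : Hom Y X, cmp g f = cid X /\ cmp f g = cid Y.

Definition split_epi (C : PreaddCat) (X Y : C) (f : Hom X Y) : Prop :=
  exists s : Hom Y X, cmp f s = cid Y.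

Definition split_mono (C : PreaddCat) (X Y : C) (f : Hom X Y) : Prop :=
  exists r : Hom Y X, cmp r f = cid X.

Definition additive_functor (C D : PreaddCat) (F : Functor C D) : Prop :=
  forall (X Y : C) (f g : Hom X Y), fmap F (f + g) = fmap F f + fmap F g.

Record TriangCat := {
  tc :> PreaddCat;
  tc_zero : exists Z : tc, cid Z = 0;
  tc_biprod : forall X Y : tc, exists (P : tc) (i1 : Hom X P) (i2 : Hom Y P)
      (p1 : Hom P X) (p2 : Hom P Y),
      [/\ cmp p1 i1 = cid X, cmp p2 i2 = cid Y, cmp p1 i2 = 0, cmp p2 i1 = 0
        & cmp i1 p1 + cmp i2 p2 = cid P];
  sft : Functor tc tc;
  sft_additive : additive_functor sft;
  sft_full : forall (X Y : tc) (g : Hom (sft X) (sft Y)),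
      exists f : Hom X Y, fmap sft f = g;
  sft_faithful : forall (X Y : tc) (f f' : Hom X Y),
      fmap sft f = fmap sft f' -> f = f';
  sft_esurj : forall Y : tc, exists (X : tc) (u : Hom (sft X) Y), is_iso u;
  dist : forall X Y Z : tc, Hom X Y -> Hom Y Z -> Hom Z (sft X) -> Prop;
  tr1_id : forall (X Z : tc), cid Z = 0 -> dist (cid X) (0 : Hom X Z) (0 : Hom Z (sft X));
  tr1_iso : forall (X Y Z X' Y' Z' : tc) (f : Hom X Y) (g : Hom Y Z) (h : Hom Z (sft X))
      (f' : Hom X' Y') (g' : Hom Y' Z') (h' : Hom Z' (sft X'))
      (a : Hom X X') (b : Hom Y Y') (c : Hom Z Z'),
      is_iso a -> is_iso b -> is_iso c ->
      cmp b f = cmp f' a -> cmp c g = cmp g' b -> cmp (fmap sft a) h = cmp h' c ->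
      dist f g h -> dist f' g' h';
  tr1_ext : forall (X Y : tc) (f : Hom X Y),
      exists (Z : tc) (g : Hom Y Z) (h : Hom Z (sft X)), dist f g h;
  tr2 : forall (X Y Z : tc) (f : Hom X Y) (g : Hom Y Z) (h : Hom Z (sft X)),
      dist f g h <-> dist g h (- fmap sft f);
  tr3 : forall (X Y Z X' Y' Z' : tc) (f : Hom X Y) (g : Hom Y Z) (h : Hom Z (sft X))
      (f' : Hom X' Y') (g' : Hom Y' Z') (h' : Hom Z' (sft X'))
      (a : Hom X X') (b : Hom Y Y'),
      dist f g h -> dist f' g' h' -> cmp b f = cmp f' a ->
      exists c : Hom Z Z', cmp c g = cmp g' b /\ cmp (fmap sft a) h = cmp h' c;
  tr4 : forall (X Y Z Z' X' Y' : tc) (f : Hom X Y) (g : Hom Y Z)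
      (j : Hom Y Z') (k : Hom Z' (sft X))
      (l : Hom Z X') (i : Hom X' (sft Y))
      (m : Hom Z Y') (n : Hom Y' (sft X)),
      dist f j k -> dist g l i -> dist (cmp g f) m n ->
      exists (u : Hom Z' Y') (v : Hom Y' X'),
        [/\ cmp u j = cmp m g, cmp n u = k, cmp v m = l,
            cmp i v = cmp (fmap sft f) n
          & dist u v (cmp (fmap sft j) i)]
}.
Arguments dist {t X Y Z} f g h.
Arguments sft {t}.

Record TriangleFunctor (C D : TriangCat) := {
  tf :> Functor C D;
  tf_additive : additive_functor tf;
  tf_phi : forall X : C, Hom (tf (sft X)) (sft (tf X));
  tf_phi_iso : forall X, is_iso (tf_phi X);
  tf_phi_nat : forall (X Y : C) (f : Hom X Y),
      cmp (tf_phi Y) (fmap tf (fmap sft f)) = cmp (fmap sft (fmap tf f)) (tf_phi X);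
  tf_dist : forall (X Y Z : C) (f : Hom X Y) (g : Hom Y Z) (h : Hom Z (sft X)),
      dist f g h -> dist (fmap tf f) (fmap tf g) (cmp (tf_phi X) (fmap tf h))
}.

Definition is_adjunction (C D : PreaddCat) (L : Functor D C) (R : Functor C D)
    (unit : forall Y : D, Hom Y (R (L Y)))
    (counit : forall X : C, Hom (L (R X)) X) : Prop :=
  [/\ forall (Y Y' : D) (g : Hom Y Y'),
        cmp (unit Y') g = cmp (fmap R (fmap L g)) (unit Y),
      forall (X X' : C) (f : Hom X X'),
        cmp f (counit X) = cmp (counit X') (fmap L (fmap R f)),
      forall Y : D, cmp (counit (L Y)) (fmap L (unit Y)) = cid (L Y)
    & forall X : C, cmp (fmap R (counit X)) (unit (R X)) = cid (R X)].

Definition rel_projective (C D : PreaddCat) (T : Functor C D) (Q : C) : Prop :=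
  forall X : C, injective (fun f : Hom Q X => fmap T f).

Definition rel_injective (C D : PreaddCat) (T : Functor C D) (Q : C) : Prop :=
  forall X : C, injective (fun f : Hom X Q => fmap T f).
Arguments is_adjunction {C D} L R unit counit.

(* Main.v *)
Require Import Defs.
From mathcomp Require Import ssreflect ssrfun ssrbool eqtype ssralg.
Set Implicit Arguments. Unset Strict Implicit.
Import GRing.Theory.
Local Open Scope ring_scope.

Section Aux.
Variable C : PreaddCat.

Lemma cmp0l (X Y Z : C) (f : Hom X Y) : cmp (0 : Hom Y Z) f = 0.
Proof.
have H := cmp_addl (0 : Hom Y Z) 0 f. rewrite addr0 in H.
by apply: (@addrI _ (cmp (0 : Hom Y Z) f)); rewrite addr0 -H.
Qed.

Lemma cmp0r (X Y Z : C) (g : Hom Y Z) : cmp g (0 : Hom X Y) = 0.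
Proof.
have H := cmp_addr g (0 : Hom X Y) 0. rewrite addr0 in H.
by apply: (@addrI _ (cmp g (0 : Hom X Y))); rewrite addr0 -H.
Qed.

Lemma cmpNl (X Y Z : C) (g : Hom Y Z) (f : Hom X Y) : cmp (- g) f = - cmp g f.
Proof.
apply/eqP; rewrite -addr_eq0 -cmp_addl addNr; exact/eqP/cmp0l.
Qed.

Lemma cmpNr (X Y Z : C) (g : Hom Y Z) (f : Hom X Y) : cmp g (- f) = - cmp g f.
Proof.
apply/eqP; rewrite -addr_eq0 -cmp_addr addNr; exact/eqP/cmp0r.
Qed.
End Aux.

Section Tri.
Variable C : TriangCat.

Lemma sft0 (X Y : C) : fmap sft (0 : Hom X Y) = 0.
Proof.
have H := sft_additive (0 : Hom X Y) 0. rewrite addr0 in H.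
by apply: (@addrI _ (fmap sft (0 : Hom X Y))); rewrite addr0 -H.
Qed.

Lemma sftN (X Y : C) (f : Hom X Y) : fmap sft (- f) = - fmap sft f.
Proof.
apply/eqP; rewrite -addr_eq0 -sft_additive addNr; exact/eqP/sft0.
Qed.

Lemma sft_id (X : C) : fmap sft (cid X) = cid (sft X).
Proof. exact: fmap_id. Qed.

Lemma dist_comp0 (X Y Z : C) (f : Hom X Y) (g : Hom Y Z) (h : Hom Z (sft X)) :
  dist f g h -> cmp g f = 0.
Proof.
move=> D. case: (tc_zero C) => Z0 HZ0.
have T0 := tr1_id X HZ0.
have [c [H1 _]] := tr3 (a := cid X) (b := f) T0 D erefl.
by rewrite -H1 cmp0r.
Qed.

Lemma dist_g0 (X Y Z : C) (f : Hom X Y) (h : Hom Z (sft X)) :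
  dist f (0 : Hom Y Z) h -> exists s : Hom Y X, cmp f s = cid Y.
Proof.
move=> D. case: (tc_zero C) => Z0 HZ0.
have T0 := tr1_id Y HZ0.
move/tr2: T0 => T0. move/tr2: D => D.
have [c [_ H2]] := tr3 (a := cid Y) (b := (0 : Hom Z0 Z)) T0 D
  ltac:(by rewrite cmp0r cmp0l).
have [s Hs] := sft_full c. exists s.
apply: (@sft_faithful C).
rewrite fmap_cmp Hs fmap_id.
move: H2; rewrite cmpNl cmpNr !sft_id cmp_idl => /eqP.
by rewrite eqr_opp => /eqP <-.
Qed.

Lemma dist_h0 (X Y Z : C) (f : Hom X Y) (g : Hom Y Z) :
  dist f g (0 : Hom Z (sft X)) -> exists r : Hom Y X, cmp r f = cid X.
Proof.
move=> D. case: (tc_zero C) => Z0 HZ0.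
move/tr2/tr2: D => D.
have HZ1 : cid (sft Z0) = 0 by rewrite -fmap_id HZ0 sft0.
have T0 := tr1_id (sft X) HZ1.
have T1 : dist (0 : Hom Z0 (sft X)) (cid (sft X)) (0 : Hom (sft X) (sft Z0)).
  by apply/tr2; rewrite sft0 oppr0.
have [c [H1 _]] := tr3 (a := (0 : Hom Z Z0)) (b := cid (sft X)) D T1
  ltac:(by rewrite cmp0r cmp0l).
have [r Hr] := sft_full c. exists (- r).
apply: (@sft_faithful C).
rewrite fmap_cmp sftN fmap_id cmpNl.
by rewrite cmpNr in H1; rewrite Hr H1 cmp_idl.
Qed.

Lemma dist_h0_mono (X Y Z : C) (f : Hom X Y) (g : Hom Y Z) (h : Hom Z (sft X)) :
  dist f g h ->
  (forall (W : C) (k k' : Hom W X), cmp f k = cmp f k' -> k = k') -> h = 0.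
Proof.
move=> D mono.
have E : cmp (fmap sft f) h = 0.
  by have := dist_comp0 ((tr2 _ _ _).1 ((tr2 f g h).1 D)); rewrite cmpNl => /eqP; rewrite oppr_eq0 => /eqP.
have [W [u [v [Hvu Huv]]]] := sft_esurj Z.
have [k Hk] := sft_full (cmp h u).
have k0 : k = 0.
  apply: mono; rewrite cmp0r; apply: (@sft_faithful C).
  by rewrite fmap_cmp Hk cmp_assoc E cmp0l sft0.
rewrite -(cmp_idr h) -Huv cmp_assoc -Hk k0 sft0 cmp0l //.
Qed.
End Tri.

Theorem corollary2p9 (CS CT : TriangCat) (T : TriangleFunctor CS CT) :
  (forall (S : Functor CT CS) (eps : forall Y : CT, Hom Y (T (S Y)))
          (eta : forall X : CS, Hom (S (T X)) X),
      is_adjunction S T eps eta ->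
      forall Q : CS, rel_projective T Q <-> split_epi (eta Q)) /\
  (forall (S : Functor CT CS) (epst : forall X : CS, Hom X (S (T X)))
          (etat : forall Y : CT, Hom (T (S Y)) Y),
      is_adjunction T S epst etat ->
      forall Q : CS, rel_injective T Q <-> split_mono (epst Q)).
Proof.
split.
- move=> S eps eta [n1 n2 t1 t2] Q; split.
  + move=> RP.
    have epi : forall (X : CS) (k k' : Hom Q X), cmp k (eta Q) = cmp k' (eta Q) -> k = k'.
      move=> X k k' E; apply: (RP X) => /=.
      rewrite -(cmp_idr (fmap T k)) -(cmp_idr (fmap T k')) -t2.
      by rewrite !cmp_assoc -!fmap_cmp E.
    have [Z [g [h D]]] := tr1_ext (eta Q).
    have g0 : g = 0.
      by apply: epi; rewrite (dist_comp0 D) cmp0l.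
    rewrite g0 in D. exact: dist_g0 D.
  + move=> [s Hs] X k k' /= E.
    rewrite -(cmp_idr k) -(cmp_idr k') -Hs !cmp_assoc n2 (n2 _ _ k') E //.
- move=> S epst etat [n1 n2 t1 t2] Q; split.
  + move=> RI.
    have mono : forall (X : CS) (k k' : Hom X Q), cmp (epst Q) k = cmp (epst Q) k' -> k = k'.
      move=> X k k' E; apply: (RI X) => /=.
      rewrite -(cmp_idl (fmap T k)) -(cmp_idl (fmap T k')) -t1.
      by rewrite -!cmp_assoc -!fmap_cmp E.
    have [Z [g [h D]]] := tr1_ext (epst Q).
    have h0 := dist_h0_mono D mono.
    rewrite h0 in D. exact: dist_h0 D.
  + move=> [r Hr] X k k' /= E.
    rewrite -(cmp_idl k) -(cmp_idl k') -Hr -!cmp_assoc n1 (n1 _ _ k') E //.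
Qed.
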